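(* Let $\mathbf d=(d_1,\ldots,d_n)$ be a degree sequence, $n\ge 3$, and define $g_n:[n]\to[0,\infty)$ by \[g_n(k)=\frac{k!}{\langle n\rangle_k}\sum_{1\le i_1<\cdots<i_k\le n}\ \prod_{j=1}^k d_{i_j}.\] Then for every $v\in[n]$ and $2\le k\le n-1$, \[\mathbb P(\mathfrak s_n(v)>k)=g_n(k)-\frac{k\,d_v}{n-k+1}\,\mathbb P(\mathfrak s_n(v)>k-1).\]
   Context: A degree sequence is $\mathbf d=(d_1,\ldots,d_n)\in\mathbb N_0^n$ with $\sum_j d_j=n$. Let $\mathfrak F(\mathbf d)=\{f:[n]\to[n]: |f^{-1}(\{i\})|=d_i\ \forall i\}$ and let $F$ be uniform on $\mathfrak F(\mathbf d)$. For $f:V\to V$, $v\in V$, the six-length is $\mathfrak s_f(v)=\min\{k\in\mathbb N: f^{(k)}(v)\in\{f^{(j)}(v):0\le j\le k-1\}\}$ ($f^{(k)}$ the $k$-fold composition, $f^{(0)}=\mathrm{id}$); $\mathfrak s_n(v)=\mathfrak s_F(v)$. $\langle n\rangle_k=n!/(n-k)!$. *)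

(* Defs.v *)
From HB Require Import structures.
From mathcomp Require Import all_boot all_order all_algebra.
Set Implicit Arguments. Unset Strict Implicit. Unset Printing Implicit Defensive.
Import Order.TTheory GRing.Theory Num.Theory.

Definition six_pred (T : finType) (f : T -> T) (x : T) (k : nat) : bool :=
  (0 < k) && (iter k f x \in traject f x k).

Lemma six_pred_ex (T : finType) (f : T -> T) (x : T) : exists k, six_pred f x k.
Proof.
exists #|T|; apply/andP; split; first by apply/card_gt0P; exists x.
apply/negPn; rewrite -looping_uniq; apply/negP => /card_uniqP.
rewrite size_traject => H.
by have := max_card (mem (traject f x #|T|.+1)); rewrite H ltnn.
Qed.

(* six-length s_f(x) = min { k >= 1 : f^(k)(x) \in {f^(j)(x) : 0 <= j <= k-1} } *)
Definition sixlen (T : finType) (f : T -> T) (x : T) : nat := ex_minn (six_pred_ex f x).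

Definition Fd (n : nat) (d : 'I_n -> nat) : {set {ffun 'I_n -> 'I_n}} :=
  [set f : {ffun 'I_n -> 'I_n} | [forall i, #|[set j | f j == i]| == d i]].

(* P(s_n(v) > k) for F uniform on F(d) *)
Definition Pgt (n : nat) (d : 'I_n -> nat) (v : 'I_n) (k : nat) : rat :=
  (#|[set f in Fd d | (k < sixlen f v)%N]|%:R / #|Fd d|%:R)%R.

(* g_n(k) = k!/<n>_k * sum_{i_1<...<i_k} prod_j d_{i_j} ; <n>_k = n ^_ k *)
Definition gn (n : nat) (d : 'I_n -> nat) (k : nat) : rat :=
  ((k`!)%:R / (n ^_ k)%:R *
   (\sum_(S : {set 'I_n} | #|S| == k) \prod_(i in S) d i)%:R)%R.

(* Main.v *)
Require Import Defs.
From HB Require Import structures.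
From mathcomp Require Import all_boot all_order all_algebra all_fingroup.
From mathcomp Require Import zify.
Import Order.TTheory GRing.Theory Num.Theory.
Set Implicit Arguments. Unset Strict Implicit.

Section Count.
Variables (n : nat) (d : 'I_n -> nat).
Local Notation FF := {ffun 'I_n -> 'I_n}.

Definition Ecs (cs : seq ('I_n * 'I_n)) : {set FF} :=
  [set f in Fd d | all (fun p => f p.1 == p.2) cs].

Lemma card_sum (T : finType) (A : {set T}) (P : pred T) :
  #|[set x in A | P x]| = \sum_(x in A) (P x : nat).
Proof.
rewrite -sum1dep_card big_mkcondr /=; apply: eq_bigl => x.
by [].
Qed.

Lemma Fd_fiber f b : f \in Fd d -> #|[set j | f j == b]| = d b.
Proof. by rewrite inE => /forallP /(_ b) /eqP. Qed.

Lemma swap_le cs b a1 a2 : a1 \notin unzip1 cs -> a2 \notin unzip1 cs ->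
  #|[set f in Ecs cs | f a1 == b]| <= #|[set f in Ecs cs | f a2 == b]|.
Proof.
move=> h1 h2.
pose t := tperm a1 a2.
pose phi (f : FF) : FF := [ffun x => f (t x)].
have phiK : involutive phi.
  by move=> f; apply/ffunP => x; rewrite !ffunE tpermK.
rewrite -(card_imset _ (inv_inj phiK)); apply: subset_leq_card.
apply/subsetP => _ /imsetP [f + ->]; rewrite !inE => /andP [/andP [fF fc] fb]; have fF' : f \in Fd d by rewrite inE.
rewrite ffunE /t tpermR fb andbT; apply/andP; split.
  apply/forallP => i; rewrite -(Fd_fiber i fF').
  have -> : [set j | phi f j == i] = t @^-1: [set j | f j == i].
    by apply/setP => j; rewrite !inE ffunE.
  by rewrite (card_preimset _ (@perm_inj _ t)).
apply/allP => p pin; rewrite /phi ffunE tpermD.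
- by move/allP: fc => /(_ p pin).
- by apply: contraNneq h1 => ->; apply/mapP; exists p.
- by apply: contraNneq h2 => ->; apply/mapP; exists p.
Qed.


Lemma sum_eqb (T : finType) (P : pred T) :
  \sum_x (P x : nat) = #|[set x | P x]|.
Proof. by rewrite -sum1dep_card [RHS]big_mkcond /=; apply: eq_bigr => x _; case: (P x). Qed.

Lemma step cs a b : uniq (unzip1 cs) -> a \notin unzip1 cs -> b \notin unzip2 cs ->
  #|[set f in Ecs cs | f a == b]| * (n - size cs) = d b * #|Ecs cs|.
Proof.
move=> u ha hb.
set D := unzip1 cs.
have cE : forall a', a' \notin D ->
    #|[set f in Ecs cs | f a' == b]| = #|[set f in Ecs cs | f a == b]|.
  by move=> a' h'; apply/eqP; rewrite eqn_leq !swap_le.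
have cardD : #|[predC D]| = n - size cs.
  have cu : #|D| = size D by apply/card_uniqP.
  have := cardC (mem D); rewrite card_ord cu size_map.
  move: #|[predC D]| => m; lia.
have S1 : \sum_(a' in [predC D]) #|[set f in Ecs cs | f a' == b]| =
          #|[set f in Ecs cs | f a == b]| * (n - size cs).
  rewrite (eq_bigr (fun _ => #|[set f in Ecs cs | f a == b]|)); last first.
    by move=> a' h'; apply: cE.
  by rewrite sum_nat_const cardD mulnC.
rewrite -S1; under eq_bigr => a' _ do rewrite card_sum.
rewrite exchange_big /= mulnC -sum_nat_const; apply: eq_bigr => f fE.
have fF : f \in Fd d by move: fE; rewrite inE => /andP [].
rewrite -(Fd_fiber b fF) -sum_eqb [RHS](bigID (mem D)) /= [X in _ = X + _]big1 ?add0n //; last first.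
move=> a' a'D; move: fE; rewrite inE => /andP [_ /allP fc].
case/mapP: a'D => p pin ->; move/eqP: (fc p pin) => ->.
case: eqP => // e; case/negP: hb; rewrite -e; apply/mapP; exists p => //.
Qed.


Lemma Ecs_count cs : uniq (unzip1 cs) -> uniq (unzip2 cs) ->
  #|Ecs cs| * n ^_ (size cs) = #|Fd d| * \prod_(p <- cs) d p.2.
Proof.
elim: cs => [|[a b] cs IH] /=.
  move=> _ _; rewrite big_nil ffactn0 !muln1; apply: eq_card => f.
  by rewrite inE andbT.
case/andP => ha u1; case/andP => hb u2.
have -> : Ecs ((a, b) :: cs) = [set f in Ecs cs | f a == b].
  by apply/setP => f; rewrite !inE /=; case: (f a == b); rewrite ?andbF ?andbT.
rewrite ffactnSr mulnA mulnAC (step u1 ha hb) big_cons /=.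
by rewrite -mulnA IH // mulnCA.
Qed.

End Count.

Lemma traj_eq (T : finType) (f : T -> T) v (t : seq T) :
  (traject f v (size t).+1 == v :: t) = all (fun p => f p.1 == p.2) (zip (belast v t) t).
Proof.
elim: t v => [|y t IH] v /=; first by rewrite eqxx.
rewrite -IH /= !eqseq_cons eqxx /=.
by rewrite eqxx; case: eqP => [->|ne].
Qed.

Lemma sixlen_uniq (T : finType) (f : T -> T) v k :
  (k < sixlen f v) = uniq (traject f v k.+1).
Proof.
rewrite /sixlen; case: ex_minnP => m Pm minm.
elim: k => [|k IH].
  by move: Pm; case/andP.
rewrite trajectSr rcons_uniq -IH andbC.
apply/idP/idP => [h|/andP [km nin]].
  rewrite (ltnW h) /=; apply/negP => hin.
  have := minm k.+1; rewrite /six_pred hin /= => /(_ isT); lia.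
rewrite ltn_neqAle km andbT; apply/eqP => e; case/negP: nin.
by move: Pm; rewrite -e /six_pred => /andP [].
Qed.

Lemma codom_inj (k : nat) (T : finType) (g1 g2 : {ffun 'I_k -> T}) :
  codom g1 = codom g2 -> g1 = g2.
Proof.
move=> e; apply: (can_inj (@fgraphK _ _)); apply: val_inj => /=.
by rewrite -!codom_ffun.
Qed.

Lemma codom_traj (T : finType) (f : T -> T) v k :
  codom [ffun i : 'I_k => iter i.+1 f v] = traject f (f v) k.
Proof.
rewrite codomE.
have -> : map [ffun i : 'I_k => iter i.+1 f v] (enum 'I_k) =
          map (fun j => iter j.+1 f v) (map val (enum 'I_k)).
  by rewrite -map_comp; apply: eq_map => i; rewrite ffunE.
rewrite val_enum_ord; apply: (@eq_from_nth _ v).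
  by rewrite size_map size_iota size_traject.
move=> i; rewrite size_map size_iota => ik.
by rewrite (nth_map 0) ?size_iota // nth_iota // (set_nth_default (f v)) ?size_traject // nth_traject // iterSr.
Qed.

Section Main.
Variables (n : nat) (d : 'I_n -> nat) (v : 'I_n).
Local Notation FF := {ffun 'I_n -> 'I_n}.

Lemma cardT k : #|[set f in Fd d | k < sixlen f v]| =
  \sum_(g : {ffun 'I_k -> 'I_n} | uniq (v :: codom g))
     #|[set f in Fd d | traject f v k.+1 == v :: codom g]|.
Proof.
under [RHS]eq_bigr => g _ do rewrite card_sum.
rewrite exchange_big card_sum /=; apply: eq_bigr => f _.
rewrite sixlen_uniq trajectS -(codom_traj f v k).
set g0 := [ffun i : 'I_k => iter i.+1 f v].
rewrite big_mkcond /= (bigD1 g0) //= eqxx big1 ?addn0.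
  by case: (uniq _).
move=> g ng; case: ifP => // _; rewrite eqseq_cons eqxx /=.
by case: eqP => // e; case/eqP: ng; apply: codom_inj.
Qed.


Lemma cardE k (g : {ffun 'I_k -> 'I_n}) : uniq (v :: codom g) ->
  #|[set f in Fd d | traject f v k.+1 == v :: codom g]| * n ^_ k =
  #|Fd d| * \prod_(y <- codom g) d y.
Proof.
move=> u; set t := codom g.
have st : size t = k by rewrite size_codom card_ord.
have -> : [set f in Fd d | traject f v k.+1 == v :: t] =
          Ecs d (zip (belast v t) t).
  by apply/setP => f; rewrite !inE -st traj_eq.
have sz : size (zip (belast v t) t) = k by rewrite size_zip size_belast minnn.
rewrite -[in n ^_ k]sz Ecs_count.
- have e2 : unzip2 (zip (belast v t) t) = t by rewrite unzip2_zip ?size_belast.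
  by rewrite -[in RHS]e2 big_map.
- rewrite unzip1_zip ?size_belast //.
  by move: u; rewrite lastI rcons_uniq => /andP [].
- by rewrite unzip2_zip ?size_belast //; case/andP: u.
Qed.


Lemma count_inj k (S : {set 'I_n}) : #|S| = k -> v \notin S ->
  #|[set g : {ffun 'I_k -> 'I_n} | uniq (v :: codom g) && ([set y in codom g] == S)]| = k`!.
Proof.
move=> cS vS.
have := card_inj_ffuns_on 'I_k (mem S); rewrite card_ord cS ffactnn => <-.
apply: eq_card => g; rewrite !inE.
have ij : injectiveb g = uniq (codom g) by [].
apply/idP/idP.
  case/andP => /andP [vg ug] /eqP eS; apply/andP; split; last exact: ug.
  by apply/ffun_onP => x; rewrite -eS inE codom_f.
case/andP => /ffun_onP on; rewrite ij => ug.
have sub : [set y in codom g] \subset S.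
  by apply/subsetP => y; rewrite inE => /codomP [x ->].
rewrite /= ug andbT; apply/andP; split.
  by apply: contra vS => /codomP [x ->].
rewrite eqEcard sub cS cardsE.
by move/card_uniqP: ug => /= ->; rewrite size_codom card_ord.
Qed.


Lemma sum_inj k :
  \sum_(g : {ffun 'I_k -> 'I_n} | uniq (v :: codom g)) \prod_(y <- codom g) d y =
  k`! * \sum_(S : {set 'I_n} | (#|S| == k) && (v \notin S)) \prod_(i in S) d i.
Proof.
rewrite (partition_big (fun g : {ffun 'I_k -> 'I_n} => [set y in codom g])
          (fun S : {set 'I_n} => (#|S| == k) && (v \notin S))) /=; last first.
  move=> g /andP [vg ug]; rewrite cardsE inE vg andbT.
  by move/card_uniqP: ug => ->; rewrite size_codom card_ord.
rewrite big_distrr /=; apply: eq_bigr => S /andP [/eqP cS vS].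
rewrite (eq_bigr (fun _ => \prod_(i in S) d i)); last first.
  move=> g /andP [/andP [_ ug] /eqP eS]; rewrite big_uniq //.
  by apply: eq_bigl => y; rewrite -eS inE.
rewrite big_const iter_addn_0 mulnC; congr (_ * _); rewrite -(count_inj cS vS) -cardsE; apply: eq_card => g; rewrite !inE. by [].
Qed.


Lemma ek_split k :
  \sum_(S : {set 'I_n} | #|S| == k.+1) \prod_(i in S) d i =
  \sum_(S : {set 'I_n} | (#|S| == k.+1) && (v \notin S)) \prod_(i in S) d i +
  d v * \sum_(S : {set 'I_n} | (#|S| == k) && (v \notin S)) \prod_(i in S) d i.
Proof.
rewrite (bigID (fun S : {set 'I_n} => v \in S)) /= addnC; congr (_ + _).
rewrite (reindex_onto (fun S => v |: S) (fun S => S :\ v)) /=; last first.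
  by move=> S /andP [_ vS]; rewrite setD1K.
rewrite big_distrr /=; apply: eq_big => S.
  case vS: (v \in S).
    rewrite setU11 andbT andbF; apply/negbTE; apply/negP => /andP [_ /eqP e].
    by move: vS; rewrite -e !inE eqxx.
  by rewrite setU11 andbT setU1K ?vS // eqxx andbT cardsU1 vS /= andbT add1n eqSS.
by move=> /andP [/andP [_ _] /eqP e]; rewrite big_setU1 //= -e !inE eqxx.
Qed.


Lemma Fd_gt0 : (\sum_(i < n) d i)%N = n -> 0 < #|Fd d|.
Proof.
move=> hs; set s := flatten [seq nseq (d i) i | i <- enum 'I_n].
have ss : size s = n.
  rewrite size_flatten /shape -map_comp sumnE big_map -[RHS]hs big_enum /=.
  by apply: eq_bigr => i _; rewrite /= size_nseq.
apply/card_gt0P; exists [ffun j : 'I_n => nth v s j].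
rewrite inE; apply/forallP => i; apply/eqP.
rewrite -sum1dep_card big_mkcond -big_enum -big_mkcond /= sum1_count.
rewrite (eq_count (a2 := preim (nth v s \o val) (pred1 i))); last first.
  by move=> j; rewrite /= ffunE.
rewrite -count_map map_comp val_enum_ord.
have := mkseq_nth v s; rewrite ss /mkseq => ->.
rewrite count_flatten sumnE big_map -map_comp big_map -enumT big_enum /=.
rewrite (bigD1 i) //= big1 ?addn0; first by rewrite count_nseq /= eqxx mul1n.
by move=> j ji; rewrite count_nseq /= (negbTE ji).
Qed.


Definition ep k := \sum_(S : {set 'I_n} | (#|S| == k) && (v \notin S)) \prod_(i in S) d i.

Lemma key k : #|[set f in Fd d | k < sixlen f v]| * n ^_ k = #|Fd d| * (k`! * ep k).
Proof.
rewrite cardT big_distrl /= (eq_bigr _ (fun g hg => cardE hg)) -big_distrr /=.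
by rewrite sum_inj.
Qed.

End Main.

From mathcomp Require Import ring.
Unset Implicit Arguments.

Theorem lemma3p3 (n : nat) (d : 'I_n -> nat) (v : 'I_n) (k : nat) :
  (\sum_(i < n) d i)%N = n -> 3 <= n -> 2 <= k -> k <= n - 1 ->
  Pgt d v k = (gn d k - (k * d v)%:R / ((n - k).+1)%:R * Pgt d v k.-1)%R.
Proof.
move=> hs n3 k2 kn.
have N0 : (#|Fd d|%:R : rat) != 0%R by rewrite pnatr_eq0 -lt0n Fd_gt0.
have P_eq : forall j, j <= n ->
    Pgt d v j = ((j`! * ep d v j)%:R / (n ^_ j)%:R)%R.
  move=> j jn; rewrite /Pgt; apply/eqP.
  rewrite eqr_div ?pnatr_eq0 -?lt0n ?ffact_gt0 ?Fd_gt0 //.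
  by rewrite -!natrM key mulnC.
case: k k2 kn => [|k'] // k2 kn.
have kn' : k' < n by lia.
have e1 : (n - k'.+1).+1 = n - k' by lia.
rewrite !P_eq /=; try lia.
rewrite /gn (ek_split d v) e1 factS ffactnSr. rewrite -/(ep d v k'.+1) -/(ep d v k').
have D1 : ((n ^_ k')%:R : rat) != 0%R by rewrite pnatr_eq0 -lt0n ffact_gt0 ltnW.
have D2 : ((n - k')%:R : rat) != 0%R by rewrite pnatr_eq0 -lt0n subn_gt0.
rewrite !natrM !natrD !natrM.
by field; rewrite D1 D2.
Qed.
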